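(* Let $\mathcal R$ be a strong CCTRS. If $s\in\mathcal T_{\mathrm p}(\mathcal H)$ is a proper ground term, then every $(\Xi(\mathcal R),\mu)$-normal form $t$ of $s$ (i.e., $s\to^*_{\Xi(\mathcal R),\mu}t$ and $t$ is irreducible with respect to $\to_{\Xi(\mathcal R),\mu}$) is a $\bot$-pattern.
   Context: A CCTRS over $\mathcal F$ is a set $\mathcal R$ of conditional rules each of the form $f(\ell_1,\dots,\ell_n)\to r\Leftarrow a_1\approx b_1,\dots,a_k\approx b_k$ (defined symbols are roots of left-hand sides, others constructors; constructor terms contain only constructors and variables) where $\ell_1,\dots,\ell_n,b_1,\dots,b_k$ are constructor terms, the terms $f(\ell_1,\dots,\ell_n),b_1,\dots,b_k$ pairwise share no variables, $\mathrm{Var}(r)\subseteq\mathrm{Var}(\ell_1,\dots,\ell_n,b_1,\dots,b_k)$, and $\mathrm{Var}(a_i)\subseteq\mathrm{Var}(\ell_1,\dots,\ell_n,b_1,\dots,b_{i-1})$. $\mathcal R{\restriction}f$ is the set of rules with left-hand root $f$. A strong CCTRS is a CCTRS with each $\mathcal R{\restriction}f$ finite and each $f(\ell_1,\dots,\ell_n)$ and $b_j$ linear. Let $m_f=|\mathcal R{\restriction}f|$ (0 for constructors), with fixed enumeration $\rho^f_1,\dots,\rho^f_{m_f}$. The transformed system: signature $\mathcal H$ with constants $\bot,\top$ ($\mu=\emptyset$); every $f\in\mathcal F$ of arity $n$ as a symbol of arity $n+m_f$ with $\mu(f)=\{1,\dots,n\}$; and for every defined $f$ of arity $n$, every $\rho^f_i$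 with $k>0$ conditions and $1\le j\le k$ a symbol $f_i^j$ of arity $n+m_f+j-1$ with $\mu(f_i^j)=\{n+i+j-1\}$. A position is active in $t$ if it is $\epsilon$ or $iq$ with $i\in\mu(\mathrm{root}(t))$ and $q$ active in $t|_i$; $\to_{\Xi(\mathcal R),\mu}$ rewrites only at active positions. $\xi_\star$ ($\star\in\{\bot,\top\}$): identity on variables, homomorphic on constructors, $f(t_1..t_n)\mapsto f(\xi_\star(t_1),\dots,\xi_\star(t_n),\star,\dots,\star)$ ($m_f$ copies) for defined $f$; a $\bot$-pattern is a linear term $\xi_\bot(t)$ with $t\in\mathcal T(\mathcal F,\mathcal V)$. For a linear constructor term $t$: $\mathrm{AP}(x)=\emptyset$, and $\mathrm{AP}(f(t_1,\dots,t_n))$ consists of $g(x_1,\dots,x_m)$ for every constructor $g\neq f$ of arity $m$, $g(x_1,\dots,x_m,\bot,\dots,\bot)$ for every defined $g$ of arity $m$, and $f(x_1,\dots,x_{i-1},u,x_{i+1},\dots,x_n)$ for $u\in\mathrm{AP}(t_i)$ (fresh distinct $x$'s). Notation: $\langle t_1,\dots,t_n\rangle[u_1,\dots,u_j]_i$ is $t_1,\dots,t_{i-1},u_1,\dots,u_j,t_{i+1},\dots,t_n$. For the $i$-th rule $\rho_i\colon f(\vec\ell)\to r\Leftarrow a_1\approx b_1,\dots,a_k\approx b_k$ of $\mathcal R{\restriction}f$ and fresh distinct $x_1,\dots,x_{m_f},y_1,\dots,y_n$, $\Xi(\mathcal R)$ contains: $(1)$ if $k=0$: $f(\vec\ell,\langle\vec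 x\rangle[\top]_i)\to\xi_\top(r)$; if $k>0$: $(2)$ $f(\vec\ell,\langle\vec x\rangle[\top]_i)\to f_i^1(\vec\ell,\langle\vec x\rangle[\xi_\top(a_1)]_i)$, $(3)$ $f_i^k(\vec\ell,\langle\vec x\rangle[b_1,\dots,b_k]_i)\to\xi_\top(r)$, $(4)$ for $1\le j<k$: $f_i^j(\vec\ell,\langle\vec x\rangle[b_1,\dots,b_j]_i)\to f_i^{j+1}(\vec\ell,\langle\vec x\rangle[b_1,\dots,b_j,\xi_\top(a_{j+1})]_i)$, $(5)$ for $1\le j\le k$ and $v\in\mathrm{AP}(b_j)$ (fresh variables): $f_i^j(\vec\ell,\langle\vec x\rangle[b_1,\dots,b_{j-1},v]_i)\to f(\vec\ell,\langle\vec x\rangle[\bot]_i)$; and for any $k$: $(6)$ for $1\le j\le n$ and $v\in\mathrm{AP}(\ell_j)$ (fresh variables): $f(\langle\vec y\rangle[v]_j,\langle\vec x\rangle[\top]_i)\to f(\langle\vec y\rangle[v]_j,\langle\vec x\rangle[\bot]_i)$. Proper terms $\mathcal T_{\mathrm p}(\mathcal H,\mathcal V)$: a term of $\mathcal T(\mathcal H,\mathcal V)$ is proper if it is a variable, or $f(s_1,\dots,s_n)$ with $f$ a constructor and proper $s_i$, or $f(s_1,\dots,s_n,c_1,\dots,c_{m_f})$ with $f$ defined, proper $s_i$ and $c_1,\dots,c_{m_f}\in\{\bot,\top\}$; $\mathcal T_{\mathrm p}(\mathcal H)$ denotes the ground proper terms. *)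

(* Defs.v *)
From Stdlib Require Import List Arith.
Import ListNotations.
Set Implicit Arguments.

Inductive term (S : Type) : Type :=
| V : nat -> term S
| Fn : S -> list (term S) -> term S.
Arguments V {S} _.

Fixpoint vars {S : Type} (t : term S) : list nat :=
  match t with
  | V x => [x]
  | Fn _ ts => flat_map vars ts
  end.

Definition linear {S : Type} (t : term S) : Prop := NoDup (vars t).
Definition ground {S : Type} (t : term S) : Prop := vars t = [].

Fixpoint subst {S : Type} (sigma : nat -> term S) (t : term S) : term S :=
  match t with
  | V x => sigma x
  | Fn f ts => Fn f (map (subst sigma) ts)
  end.

Definition disjoint (l1 l2 : list nat) : Prop :=
  forall x, In x l1 -> ~ In x l2.

(* A conditional rule  f(cl) -> cr <= a_1 ~ b_1, ..., a_k ~ b_k ;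
   the root symbol f is given by the index under which the rule is stored. *)
Record crule (FS : Type) := CRule {
  cl : list (term FS);
  cr : term FS;
  cc : list (term FS * term FS)
}.

Definition rule_vars {FS : Type} (rho : crule FS) : list nat :=
  flat_map vars (cl rho) ++ vars (cr rho)
  ++ flat_map (fun p => vars (fst p) ++ vars (snd p)) (cc rho).

Inductive hsym (FS : Type) : Type :=
| HF : FS -> hsym FS                     (* f in F, arity n + m_f *)
| HCond : FS -> nat -> nat -> hsym FS    (* f_i^j  (i, j are 1-based) *)
| HBot : hsym FS
| HTop : hsym FS.
Arguments HBot {FS}.
Arguments HTop {FS}.

Definition tBot {FS : Type} : term (hsym FS) := Fn HBot [].
Definition tTop {FS : Type} : term (hsym FS) := Fn HTop [].

(* <l>[us]_i  (i is 1-based): replace the i-th element of l by the list us *)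
Definition splice {A : Type} (l : list A) (i : nat) (us : list A) : list A :=
  firstn (i - 1) l ++ us ++ skipn i l.

Section CCTRS.
Context {FS : Type} (ar : FS -> nat).
(* R f is the fixed enumeration rho^f_1, ..., rho^f_{m_f} of R|f *)
Context (R : FS -> list (crule FS)).

Definition mf (f : FS) : nat := length (R f).
Definition defined (f : FS) : Prop := R f <> [].
Definition is_constructor (f : FS) : Prop := R f = [].

Inductive wf : term FS -> Prop :=
| wf_V x : wf (V x)
| wf_Fn g ts : length ts = ar g -> Forall wf ts -> wf (Fn g ts).

Inductive ctor_term : term FS -> Prop :=
| ct_V x : ctor_term (V x)
| ct_Fn g ts : is_constructor g -> Forall ctor_term ts -> ctor_term (Fn g ts).

Definition cctrs_rule (f : FS) (rho : crule FS) : Prop :=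
  length (cl rho) = ar f /\ Forall wf (cl rho) /\ wf (cr rho)
  /\ Forall (fun p => wf (fst p) /\ wf (snd p)) (cc rho)
  /\ Forall ctor_term (cl rho)
  /\ Forall (fun p => ctor_term (snd p)) (cc rho)
  /\ (forall j a b, nth_error (cc rho) j = Some (a, b) ->
        disjoint (flat_map vars (cl rho)) (vars b))
  /\ (forall j j' a b a' b', j <> j' ->
        nth_error (cc rho) j = Some (a, b) ->
        nth_error (cc rho) j' = Some (a', b') -> disjoint (vars b) (vars b'))
  /\ incl (vars (cr rho))
          (flat_map vars (cl rho) ++ flat_map (fun p => vars (snd p)) (cc rho))
  (* Var(a_i) included in Var(l, b_1..b_{i-1})  (j = i-1, 0-based) *)
  /\ (forall j a b, nth_error (cc rho) j = Some (a, b) ->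
        incl (vars a) (flat_map vars (cl rho)
                       ++ flat_map (fun p => vars (snd p)) (firstn j (cc rho)))).

(* A strong CCTRS: each R|f finite (given as the list R f, without
   repetitions), every rule satisfies the CCTRS conditions, f(l) and each
   b_j are linear. *)
Definition strong_CCTRS : Prop :=
  forall f, NoDup (R f) /\
    forall rho, In rho (R f) ->
      cctrs_rule f rho
      /\ NoDup (flat_map vars (cl rho))
      /\ Forall (fun p => linear (snd p)) (cc rho).

Fixpoint xi (c : term (hsym FS)) (t : term FS) : term (hsym FS) :=
  match t with
  | V x => V x
  | Fn f ts => Fn (HF f) (map (xi c) ts ++ repeat c (mf f))
  end.

(* a constructor term seen as an H-term (homomorphic embedding) *)
Fixpoint cemb (t : term FS) : term (hsym FS) :=
  match t with
  | V x => V x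
  | Fn f ts => Fn (HF f) (map cemb ts)
  end.

(* u in AP(t), with fresh distinct variables (t a linear constructor term) *)
Inductive AP : term FS -> term (hsym FS) -> Prop :=
| AP_ctor f ts g xs :
    is_constructor g -> g <> f -> length xs = ar g -> NoDup xs ->
    AP (Fn f ts) (Fn (HF g) (map V xs))
| AP_def f ts g xs :
    defined g -> length xs = ar g -> NoDup xs ->
    AP (Fn f ts) (Fn (HF g) (map V xs ++ repeat tBot (mf g)))
| AP_arg f ts1 t ts2 u xs1 xs2 :
    AP t u -> length xs1 = length ts1 -> length xs2 = length ts2 ->
    NoDup (xs1 ++ xs2 ++ vars u) ->
    AP (Fn f (ts1 ++ t :: ts2)) (Fn (HF f) (map V xs1 ++ u :: map V xs2)).

Definition setup (f : FS) (i : nat) (rho : crule FS) (xs : list nat) : Prop :=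
  1 <= i /\ nth_error (R f) (i - 1) = Some rho /\
  length xs = mf f /\ NoDup xs /\ disjoint xs (rule_vars rho).

Definition Bs (rho : crule FS) (j : nat) : list (term (hsym FS)) :=
  map (fun p => cemb (snd p)) (firstn j (cc rho)).

Definition Ls (rho : crule FS) : list (term (hsym FS)) := map cemb (cl rho).

Definition Xs (xs : list nat) : list (term (hsym FS)) := map V xs.

Inductive Xi : term (hsym FS) -> term (hsym FS) -> Prop :=
| Xi1 f i rho xs :
    setup f i rho xs -> cc rho = [] ->
    Xi (Fn (HF f) (Ls rho ++ splice (Xs xs) i [tTop])) (xi tTop (cr rho))
| Xi2 f i rho xs a1 b1 :
    setup f i rho xs -> nth_error (cc rho) 0 = Some (a1, b1) ->
    Xi (Fn (HF f) (Ls rho ++ splice (Xs xs) i [tTop]))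
       (Fn (HCond f i 1) (Ls rho ++ splice (Xs xs) i [xi tTop a1]))
| Xi3 f i rho xs :
    setup f i rho xs -> 0 < length (cc rho) ->
    Xi (Fn (HCond f i (length (cc rho)))
           (Ls rho ++ splice (Xs xs) i (Bs rho (length (cc rho)))))
       (xi tTop (cr rho))
| Xi4 f i rho xs j a b :
    setup f i rho xs -> 1 <= j -> j < length (cc rho) ->
    nth_error (cc rho) j = Some (a, b) ->    (* (a,b) = (a_{j+1}, b_{j+1}) *)
    Xi (Fn (HCond f i j) (Ls rho ++ splice (Xs xs) i (Bs rho j)))
       (Fn (HCond f i (S j))
           (Ls rho ++ splice (Xs xs) i (Bs rho j ++ [xi tTop a])))
| Xi5 f i rho xs j a b v :
    setup f i rho xs -> 1 <= j -> j <= length (cc rho) ->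
    nth_error (cc rho) (j - 1) = Some (a, b) ->   (* (a,b) = (a_j, b_j) *)
    AP b v -> disjoint (vars v) (xs ++ rule_vars rho) ->
    Xi (Fn (HCond f i j) (Ls rho ++ splice (Xs xs) i (Bs rho (j - 1) ++ [v])))
       (Fn (HF f) (Ls rho ++ splice (Xs xs) i [tBot]))
| Xi6 f i rho xs ys j lj v :
    setup f i rho xs -> length ys = ar f -> NoDup (xs ++ ys) ->
    disjoint ys (rule_vars rho) ->
    1 <= j -> j <= ar f -> nth_error (cl rho) (j - 1) = Some lj ->
    AP lj v -> disjoint (vars v) (xs ++ ys ++ rule_vars rho) ->
    Xi (Fn (HF f) (splice (Xs ys) j [v] ++ splice (Xs xs) i [tTop]))
       (Fn (HF f) (splice (Xs ys) j [v] ++ splice (Xs xs) i [tBot])).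

(* replacement map mu, with 0-based argument indices *)
Definition active (g : hsym FS) (k : nat) : Prop :=
  match g with
  | HF f => k < ar f
  | HCond f i j => k + 2 = ar f + i + j      (* mu(f_i^j) = {n+i+j-1} *)
  | HBot | HTop => False
  end.

Inductive cstep : term (hsym FS) -> term (hsym FS) -> Prop :=
| cstep_root l r sigma : Xi l r -> cstep (subst sigma l) (subst sigma r)
| cstep_ctx g ts1 t t' ts2 :
    active g (length ts1) -> cstep t t' ->
    cstep (Fn g (ts1 ++ t :: ts2)) (Fn g (ts1 ++ t' :: ts2)).

Inductive csteps : term (hsym FS) -> term (hsym FS) -> Prop :=
| csteps_refl t : csteps t t
| csteps_step t u w : cstep t u -> csteps u w -> csteps t w.

Definition normal_form_of (s t : term (hsym FS)) : Prop :=
  csteps s t /\ ~ (exists u, cstep t u).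

Inductive proper : term (hsym FS) -> Prop :=
| pr_V x : proper (V x)
| pr_F f ss cs :
    length ss = ar f -> Forall proper ss ->
    length cs = mf f -> Forall (fun c => c = tBot \/ c = tTop) cs ->
    proper (Fn (HF f) (ss ++ cs)).

Definition bot_pattern (t : term (hsym FS)) : Prop :=
  linear t /\ exists u, wf u /\ t = xi tBot u.

End CCTRS.

(* Main.v *)
Require Import Defs.
From Stdlib Require Import List Arith Lia Classical Permutation.
Import ListNotations.

Lemma app_len_inv {A} (a b c d : list A) :
  length a = length c -> a ++ b = c ++ d -> a = c /\ b = d.
Proof.
  revert c; induction a as [|x a IH]; intros [|y c] Hl He; simpl in *; try lia; auto.
  injection He as -> He. destruct (IH c ltac:(lia) He) as [-> ->]. auto.
Qed.

Lemma app_cons_len_inv {A} (a c d : list A) x b :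
  length a < length c -> a ++ x :: b = c ++ d ->
  exists c2, c = a ++ x :: c2 /\ b = c2 ++ d.
Proof.
  revert c; induction a as [|z a IH]; intros [|y c] Hl He; simpl in *; try lia.
  - injection He as -> ->. eauto.
  - injection He as -> He. destruct (IH c ltac:(lia) He) as [c2 [-> ->]]. eauto.
Qed.

Fixpoint term_ind' {S} (P : term S -> Prop) (HV : forall x, P (V x))
  (HF : forall f ts, Forall P ts -> P (Fn f ts)) (t : term S) : P t :=
  match t with
  | V x => HV x
  | Fn f ts => HF f ts ((fix go l := match l return Forall P l with
                   | [] => Forall_nil _
                   | t :: l => Forall_cons _ (term_ind' P HV HF t) (go l) end) ts)
  end.

Lemma subst_ext {S} (s1 s2 : nat -> term S) t :
  (forall x, In x (vars t) -> s1 x = s2 x) -> subst s1 t = subst s2 t.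
Proof.
  induction t as [x|f ts IH] using term_ind'; simpl; intros H.
  - apply H; auto.
  - f_equal. induction IH; simpl in *; auto.
    f_equal. apply H0; intros; apply H; apply in_app_iff; auto.
    apply IHIH; intros; apply H; apply in_app_iff; auto.
Qed.

Lemma map_subst_ext {S} (s1 s2 : nat -> term S) ts :
  (forall x, In x (flat_map vars ts) -> s1 x = s2 x) -> map (subst s1) ts = map (subst s2) ts.
Proof.
  induction ts; simpl; intros H; auto. f_equal.
  apply subst_ext; intros; apply H, in_app_iff; auto.
  apply IHts; intros; apply H, in_app_iff; auto.
Qed.

Lemma map_subst_Xs {S} (s : nat -> term (hsym S)) xs : map (subst s) (Xs xs) = map s xs.
Proof. unfold Xs. rewrite map_map. reflexivity. Qed.

Lemma flat_map_vars_Xs {S} xs : flat_map vars (Xs (FS:=S) xs) = xs.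
Proof. induction xs; simpl; auto. f_equal; auto. Qed.

Lemma flat_map_vars_repeat {S} (n : nat) : flat_map vars (repeat (@tBot S) n) = [].
Proof. induction n; simpl; auto. Qed.

Lemma map_subst_repeat {S} (s : nat -> term (hsym S)) c n :
  vars c = [] -> map (subst s) (repeat c n) = repeat c n.
Proof.
  intros Hc. induction n; simpl; auto. f_equal; auto.
  rewrite <- (subst_ext V s c). 2:{ rewrite Hc; simpl; tauto. }
  clear. induction c using term_ind'; simpl; auto. f_equal. induction H; simpl; f_equal; auto.
Qed.

Lemma map_splice {A B} (f : A -> B) l i us :
  map f (splice l i us) = splice (map f l) i (map f us).
Proof. unfold splice. rewrite !map_app, firstn_map, skipn_map. reflexivity. Qed.

Lemma length_splice1 {A} (l : list A) i (c : A) :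
  1 <= i -> i <= length l -> length (splice l i [c]) = length l.
Proof.
  intros. unfold splice. rewrite !length_app, length_firstn, length_skipn. simpl. lia.
Qed.

Lemma splice_mid {A} (a b : list A) x us :
  splice (a ++ x :: b) (length a + 1) us = a ++ us ++ b.
Proof.
  unfold splice. replace (length a + 1 - 1) with (length a) by lia.
  rewrite firstn_app, firstn_all, Nat.sub_diag, skipn_app, skipn_all2 by lia.
  simpl. rewrite app_nil_r. replace (length a + 1 - length a) with 1 by lia. reflexivity.
Qed.

Fixpoint upd {S} (xs : list nat) (vs : list (term S)) (s0 : nat -> term S) : nat -> term S :=
  match xs, vs with
  | x :: xs', v :: vs' => fun y => if Nat.eqb y x then v else upd xs' vs' s0 y
  | _, _ => s0
  end.

Lemma upd_out {S} xs vs (s0 : nat -> term S) y : ~ In y xs -> upd xs vs s0 y = s0 y.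
Proof.
  revert vs; induction xs; intros [|v vs] H; simpl in *; auto.
  destruct (Nat.eqb_spec y a); [exfalso; auto|]. apply IHxs; tauto.
Qed.

Lemma upd_map {S} xs vs (s0 : nat -> term S) :
  NoDup xs -> length xs = length vs -> map (upd xs vs s0) xs = vs.
Proof.
  revert vs; induction xs; intros [|v vs] Hn Hl; simpl in *; try lia; auto.
  inversion Hn; subst. rewrite Nat.eqb_refl. f_equal.
  transitivity (map (upd xs vs s0) xs); [|apply IHxs; auto]. apply map_ext_in. intros y Hy.
  destruct (Nat.eqb_spec y a); [subst; contradiction|reflexivity].
Qed.

Definition cmb {S} (l : list nat) (s1 s2 : nat -> term S) : nat -> term S :=
  fun x => if in_dec Nat.eq_dec x l then s1 x else s2 x.

Lemma fresh_vars (n : nat) (L : list nat) :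
  exists xs, length xs = n /\ NoDup xs /\ disjoint xs L.
Proof.
  exists (seq (S (list_max L)) n). split; [apply length_seq|]. split; [apply seq_NoDup|].
  intros x Hx HL. apply in_seq in Hx.
  assert (list_max L <= list_max L) as H by lia. apply list_max_le in H.
  rewrite Forall_forall in H. specialize (H x HL). lia.
Qed.

Lemma vars_cemb {S} (t : term S) : vars (cemb t) = vars t.
Proof.
  induction t using term_ind'; simpl; auto.
  induction H; simpl; auto. rewrite H, IHForall. reflexivity.
Qed.

Lemma flat_map_vars_cemb {S} (ts : list (term S)) : flat_map vars (map cemb ts) = flat_map vars ts.
Proof. induction ts; simpl; auto. rewrite vars_cemb, IHts; auto. Qed.

Section S.
Context {FS : Type} (ar : FS -> nat) (R : FS -> list (crule FS)).
Notation T := (term (hsym FS)).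
Definition flag (c : T) : Prop := c = tBot \/ c = tTop.

Inductive G : T -> Prop :=
| G_F f ss cs : length ss = ar f -> (forall s, In s ss -> G s) ->
    length cs = mf R f -> Forall flag cs -> G (Fn (HF f) (ss ++ cs))
| G_C f i j rho (sg : nat -> T) cs1 cs2 w :
    1 <= i -> nth_error (R f) (i - 1) = Some rho -> 1 <= j -> j <= length (cc rho) ->
    length cs1 = i - 1 -> length cs1 + S (length cs2) = mf R f ->
    Forall flag cs1 -> Forall flag cs2 ->
    (forall s, In s (map (subst sg) (Ls rho)) -> G s) ->
    (forall b, In b (map (subst sg) (Bs rho (j - 1))) -> G b) -> G w ->
    G (Fn (HCond f i j) (map (subst sg) (Ls rho) ++ cs1 ++ map (subst sg) (Bs rho (j - 1)) ++ w :: cs2)).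

Lemma G_inv_F f args : G (Fn (HF f) args) -> exists ss cs, args = ss ++ cs /\
  length ss = ar f /\ (forall s, In s ss -> G s) /\ length cs = mf R f /\ Forall flag cs.
Proof. intros H; inversion H; subst; eauto 10. Qed.

Lemma G_inv_C f i j args : G (Fn (HCond f i j) args) -> exists rho sg cs1 cs2 w,
    1 <= i /\ nth_error (R f) (i - 1) = Some rho /\ 1 <= j /\ j <= length (cc rho) /\
    length cs1 = i - 1 /\ length cs1 + S (length cs2) = mf R f /\
    Forall flag cs1 /\ Forall flag cs2 /\
    (forall s, In s (map (subst sg) (Ls rho)) -> G s) /\
    (forall b, In b (map (subst sg) (Bs rho (j - 1))) -> G b) /\ G w /\
    args = map (subst sg) (Ls rho) ++ cs1 ++ map (subst sg) (Bs rho (j - 1)) ++ w :: cs2.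
Proof. intros H; inversion H; subst; eauto 20. Qed.

Lemma G_not_V x : ~ G (V x).
Proof. intros H; inversion H. Qed.

Lemma xiTop_G (sg : nat -> T) a : wf ar a -> (forall x, In x (vars a) -> G (sg x)) ->
  G (subst sg (xi R tTop a)).
Proof.
  induction a as [x|g ts IH] using term_ind'; intros Hw Hv; simpl.
  - apply Hv; simpl; auto.
  - inversion Hw; subst. rewrite map_app, map_subst_repeat by reflexivity.
    apply G_F.
    + rewrite !length_map; auto.
    + intros s Hs. rewrite map_map in Hs. apply in_map_iff in Hs as [t [<- Ht]].
      rewrite Forall_forall in IH, H2. apply IH; auto.
      intros x Hx; apply Hv; simpl; apply in_flat_map; eauto.
    + apply repeat_length.
    + rewrite Forall_forall; intros c Hc. apply repeat_spec in Hc. right; auto.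
Qed.

Lemma ctor_vars_G (sg : nat -> T) b : ctor_term R b -> G (subst sg (cemb b)) ->
  forall x, In x (vars b) -> G (sg x).
Proof.
  induction b as [x|g ts IH] using term_ind'; intros Hc HG y Hy; simpl in *.
  - destruct Hy as [<-|[]]; auto.
  - inversion Hc; subst. apply G_inv_F in HG as [ss [cs [He [_ [Hss [Hcs _]]]]]].
    unfold mf in Hcs; rewrite H1 in Hcs. destruct cs; [|discriminate].
    rewrite app_nil_r in He. subst ss.
    apply in_flat_map in Hy as [t [Ht Hy]].
    rewrite Forall_forall in IH, H2. apply (IH t Ht (H2 t Ht)); auto.
    apply Hss. rewrite map_map. apply in_map_iff; eauto.
Qed.

Lemma ctor_list_vars_G (sg : nat -> T) ls : Forall (ctor_term R) ls ->
  (forall s, In s (map (subst sg) (map cemb ls)) -> G s) ->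
  forall x, In x (flat_map vars ls) -> G (sg x).
Proof.
  intros Hc Hs x Hx. apply in_flat_map in Hx as [t [Ht Hx]].
  rewrite Forall_forall in Hc. apply (ctor_vars_G sg t); auto.
  apply Hs. rewrite map_map. apply in_map_iff; eauto.
Qed.

Lemma vars_xi c u : vars c = [] -> vars (xi R c u) = vars u.
Proof.
  intros Hc. induction u as [x|g ts IH] using term_ind'; simpl; auto.
  rewrite flat_map_app. assert (flat_map vars (repeat c (mf R g)) = []) as ->.
  { induction (mf R g); simpl; auto. rewrite Hc; auto. }
  rewrite app_nil_r. induction IH; simpl; auto. rewrite H, IHIH; auto.
Qed.

End S.

Lemma nth_error_lt {A} (l : list A) n x : nth_error l n = Some x -> n < length l.
Proof. revert n; induction l; intros [|n] H; simpl in *; try discriminate; try lia. apply IHl in H; lia. Qed.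

Lemma firstn_S_nth {A} (l : list A) j x : nth_error l j = Some x -> firstn (S j) l = firstn j l ++ [x].
Proof. revert j; induction l; intros [|j] H; simpl in *; try discriminate. injection H as ->; auto.
  rewrite (IHl j H). reflexivity. Qed.

Lemma flat_map_map_snd {A B} (f : B -> list nat) (l : list (A * B)) :
  flat_map f (map snd l) = flat_map (fun p => f (snd p)) l.
Proof. induction l; simpl; f_equal; auto. Qed.

Lemma Forall_splice {A} (P : A -> Prop) l i us :
  Forall P (splice l i us) <-> Forall P (firstn (i - 1) l) /\ Forall P us /\ Forall P (skipn i l).
Proof. unfold splice. rewrite !Forall_app. tauto. Qed.

Lemma in_firstn {A} n (l : list A) x : In x (firstn n l) -> In x l.
Proof. intros H. rewrite <- (firstn_skipn n l). apply in_app_iff; auto. Qed.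

Section S.
Context {FS : Type} (ar : FS -> nat) (R : FS -> list (crule FS)).
Hypothesis HS : strong_CCTRS ar R.
Notation T := (term (hsym FS)).
Notation G := (G ar R).
Notation flag := (@flag FS).
Implicit Types rho : crule FS.

Lemma rfacts f i rho : nth_error (R f) i = Some rho ->
  cctrs_rule ar R f rho /\ NoDup (flat_map vars (cl rho)) /\ Forall (fun p => linear (snd p)) (cc rho).
Proof. intros H. apply nth_error_In in H. apply (proj2 (HS f)); auto. Qed.

Lemma length_Ls rho f i : nth_error (R f) i = Some rho -> length (Ls rho) = ar f.
Proof. intros H. apply rfacts in H as [[H _] _]. unfold Ls. rewrite length_map; auto. Qed.

Lemma length_Bs rho j : j <= length (cc rho) -> length (Bs rho j) = j.
Proof. intros. unfold Bs. rewrite length_map, length_firstn. lia. Qed.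

Lemma Bs_S rho j a b : nth_error (cc rho) j = Some (a, b) -> Bs rho (S j) = Bs rho j ++ [cemb b].
Proof. intros H. unfold Bs. rewrite (firstn_S_nth _ _ _ H), map_app. reflexivity. Qed.

Lemma Bs_eq rho j : Bs rho j = map cemb (map snd (firstn j (cc rho))).
Proof. unfold Bs. rewrite map_map. reflexivity. Qed.

Lemma Bs_vars_G rho f i (sg : nat -> T) j : nth_error (R f) i = Some rho ->
  (forall s, In s (map (subst sg) (Bs rho j)) -> G s) ->
  forall x, In x (flat_map (fun p => vars (snd p)) (firstn j (cc rho))) -> G (sg x).
Proof.
  intros Hr Hb x Hx. apply rfacts in Hr as [[_ [_ [_ [_ [_ [Hct _]]]]]] _].
  rewrite Bs_eq in Hb. rewrite <- flat_map_map_snd in Hx.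
  apply (ctor_list_vars_G ar R sg (map snd (firstn j (cc rho)))); auto.
  rewrite Forall_map. rewrite Forall_forall in *. intros p Hp. apply Hct. eapply in_firstn; eauto.
Qed.

Lemma map_subst_splice_Xs (sg : nat -> T) xs i us :
  map (subst sg) (splice (Xs xs) i us) = splice (map sg xs) i (map (subst sg) us).
Proof. rewrite map_splice, map_subst_Xs. reflexivity. Qed.

Lemma i_le_mf f i rho : nth_error (R f) (i - 1) = Some rho -> 1 <= i -> i <= mf R f.
Proof. intros H Hi. apply nth_error_lt in H. unfold mf. lia. Qed.

Lemma dec_F f A B : length A = ar f -> G (Fn (HF f) (A ++ B)) ->
  (forall s, In s A -> G s) /\ Forall flag B /\ length B = mf R f.
Proof.
  intros Hl HG. apply G_inv_F in HG as [ss [cs [He [Hl2 [Hs [Hc Hf]]]]]].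
  apply app_len_inv in He as [-> ->]; [|lia]. auto.
Qed.

Lemma mk_C f i j rho (sg : nat -> T) xs ws w :
  setup R f i rho xs -> 1 <= j -> j <= length (cc rho) ->
  Forall flag (firstn (i - 1) (map sg xs)) -> Forall flag (skipn i (map sg xs)) ->
  (forall s, In s (map (subst sg) (Ls rho)) -> G s) ->
  (forall b, In b (map (subst sg) (Bs rho (j - 1))) -> G b) -> G w ->
  ws = map (subst sg) (Bs rho (j - 1)) ++ [w] ->
  G (Fn (HCond f i j) (map (subst sg) (Ls rho) ++ splice (map sg xs) i ws)).
Proof.
  intros [Hi [Hr [Hlx _]]] Hj Hjk Hf1 Hf2 HL HB Hw ->.
  pose proof (i_le_mf _ _ _ Hr Hi).
  unfold splice. rewrite <- app_assoc. simpl.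
  apply G_C; auto.
  - rewrite length_firstn, length_map. lia.
  - rewrite length_firstn, length_skipn, length_map. lia.
Qed.

Lemma dec_C f i j rho (sg : nat -> T) xs ws :
  setup R f i rho xs -> length ws = j ->
  G (Fn (HCond f i j) (map (subst sg) (Ls rho) ++ splice (map sg xs) i ws)) ->
  Forall flag (firstn (i - 1) (map sg xs)) /\ Forall flag (skipn i (map sg xs)) /\
  (forall s, In s (map (subst sg) (Ls rho)) -> G s) /\ (forall b, In b ws -> G b).
Proof.
  intros [Hi [Hr [Hlx _]]] Hlw HG.
  pose proof (i_le_mf _ _ _ Hr Hi).
  apply G_inv_C in HG as [rho' [sg' [cs1 [cs2 [w [_ [Hr' [Hj [Hjk [Hl1 [Hl2 [Hf1 [Hf2 [HL [HB [Hw He]]]]]]]]]]]]]]]].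
  rewrite Hr in Hr'. injection Hr' as <-.
  apply app_len_inv in He as [E1 He]; [|rewrite !length_map; auto].
  rewrite <- E1 in HL.
  unfold splice in He.
  apply app_len_inv in He as [E2 He]; [|rewrite length_firstn, length_map; lia].
  replace (map (subst sg') (Bs rho (j - 1)) ++ w :: cs2) with
    ((map (subst sg') (Bs rho (j - 1)) ++ [w]) ++ cs2) in He by (rewrite <- app_assoc; reflexivity).
  apply app_len_inv in He as [E3 E4];
    [|rewrite length_app, length_map, length_Bs by lia; simpl; lia].
  subst. repeat split; auto.
  intros b Hb. rewrite E3 in Hb. apply in_app_iff in Hb as [Hb|[<-|[]]]; auto.
Qed.

Lemma root_G l r (sg : nat -> T) : Xi ar R l r -> G (subst sg l) -> G (subst sg r).
Proof.
  intros HX. destruct HX; simpl; intros HG.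
  -
    destruct H as [Hi [Hr [Hlx _]]].
    rewrite map_app in HG. apply dec_F in HG as [HL _]; [|rewrite length_map; eapply length_Ls; eauto].
    pose proof (rfacts _ _ _ Hr) as [[_ [_ [Hwr [_ [_ [_ [_ [_ [Hinc _]]]]]]]]] _].
    apply xiTop_G; auto. intros x Hx. apply Hinc in Hx. rewrite H0 in Hx. simpl in Hx.
    rewrite app_nil_r in Hx.
    pose proof (rfacts _ _ _ Hr) as [[_ [_ [_ [_ [Hct _]]]]] _].
    eapply ctor_list_vars_G; eauto.
  -
    pose proof H as [Hi [Hr [Hlx _]]].
    rewrite map_app, map_subst_splice_Xs in HG. rewrite map_app, map_subst_splice_Xs.
    apply dec_F in HG as [HL [Hfl _]]; [|rewrite length_map; eapply length_Ls; eauto].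
    apply Forall_splice in Hfl as [Hf1 [_ Hf2]].
    pose proof (rfacts _ _ _ Hr) as [[_ [_ [_ [Hwc [_ [_ [_ [_ [_ Hinc]]]]]]]]] _].
    apply (mk_C f i 1 rho sg xs _ (subst sg (xi R tTop a1))); auto.
    + apply nth_error_lt in H0; lia.
    + simpl. tauto.
    + apply xiTop_G.
      * rewrite Forall_forall in Hwc. apply (Hwc (a1, b1)). eapply nth_error_In; eauto.
      * intros x Hx. apply (Hinc 0 a1 b1 H0) in Hx. simpl in Hx. rewrite app_nil_r in Hx.
        pose proof (rfacts _ _ _ Hr) as [[_ [_ [_ [_ [Hct _]]]]] _].
        eapply ctor_list_vars_G; eauto.
  -
    pose proof H as [Hi [Hr [Hlx _]]].
    rewrite map_app, map_subst_splice_Xs in HG.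
    apply dec_C in HG as [_ [_ [HL HB]]]; auto; [|rewrite length_map, length_Bs; lia].
    pose proof (rfacts _ _ _ Hr) as [[_ [_ [Hwr [_ [Hct [_ [_ [_ [Hinc _]]]]]]]]] _].
    apply xiTop_G; auto. intros x Hx. apply Hinc in Hx. apply in_app_iff in Hx as [Hx|Hx].
    + eapply ctor_list_vars_G; eauto.
    + apply (Bs_vars_G rho f (i - 1) sg (length (cc rho))); auto.
      rewrite firstn_all. auto.
  -
    pose proof H as [Hi [Hr [Hlx _]]].
    rewrite map_app, map_subst_splice_Xs in HG. rewrite map_app, map_subst_splice_Xs.
    apply dec_C in HG as [Hf1 [Hf2 [HL HB]]]; auto; [|rewrite length_map, length_Bs; lia].
    pose proof (rfacts _ _ _ Hr) as [[_ [_ [_ [Hwc [Hct [_ [_ [_ [_ Hinc]]]]]]]]] _].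
    apply (mk_C f i (S j) rho sg xs _ (subst sg (xi R tTop a))); auto; try lia.
    + simpl. rewrite Nat.sub_0_r. auto.
    + apply xiTop_G.
      * rewrite Forall_forall in Hwc. apply (Hwc (a, b)). eapply nth_error_In; eauto.
      * intros x Hx. apply (Hinc j a b H2) in Hx. apply in_app_iff in Hx as [Hx|Hx].
        -- eapply ctor_list_vars_G; eauto.
        -- eapply (Bs_vars_G rho f (i - 1) sg j); eauto.
    + simpl. rewrite Nat.sub_0_r, map_app. reflexivity.
  -
    pose proof H as [Hi [Hr [Hlx _]]].
    rewrite map_app, map_subst_splice_Xs in HG. rewrite map_app, map_subst_splice_Xs.
    apply dec_C in HG as [Hf1 [Hf2 [HL HB]]]; auto;
      [|rewrite length_map, length_app, length_Bs; simpl; lia].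
    pose proof (i_le_mf _ _ _ Hr Hi).
    apply G_F; [rewrite length_map; eapply length_Ls; eauto | auto
      | cbn [map]; rewrite length_splice1; rewrite ?length_map; unfold mf in *; lia
      | apply Forall_splice; cbn [map]; repeat split; auto; constructor; [left; reflexivity|constructor]].
  -
    pose proof H as [Hi [Hr [Hlx _]]].
    rewrite map_app, !map_subst_splice_Xs in HG. rewrite map_app, !map_subst_splice_Xs.
    pose proof (i_le_mf _ _ _ Hr Hi).
    apply dec_F in HG as [HL [Hfl Hlc]];
      [|cbn [map]; rewrite length_splice1; rewrite ?length_map; lia].
    apply Forall_splice in Hfl as [Hf1 [_ Hf2]].
    apply G_F; [ cbn [map]; rewrite length_splice1; rewrite ?length_map; lia | auto
      | cbn [map]; rewrite length_splice1; rewrite ?length_map; unfold mf in *; lia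
      | apply Forall_splice; cbn [map]; repeat split; auto; constructor; [left; reflexivity|constructor]].
Qed.

End S.

Lemma flat_map_nil {A B} (f : A -> list B) l : flat_map f l = [] -> forall x, In x l -> f x = [].
Proof.
  induction l; simpl; intros H x Hx; [destruct Hx|].
  apply app_eq_nil in H as [H1 H2]. destruct Hx as [<-|Hx]; auto.
Qed.

Section S.
Context {FS : Type} (ar : FS -> nat) (R : FS -> list (crule FS)).
Hypothesis HS : strong_CCTRS ar R.
Notation T := (term (hsym FS)).
Notation G := (G ar R).
Implicit Types rho : crule FS.

Lemma ctx_G g ts1 (t t' : T) ts2 : active ar g (length ts1) -> G (Fn g (ts1 ++ t :: ts2)) ->
  G t /\ (G t' -> G (Fn g (ts1 ++ t' :: ts2))).
Proof.
  intros Ha HG. destruct g as [f|f i j| |]; simpl in Ha; try contradiction.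
  - apply G_inv_F in HG as [ss [cs [He [Hl [Hs [Hc Hf]]]]]].
    apply app_cons_len_inv in He as [c2 [-> ->]]; [|lia].
    split. { apply Hs, in_app_iff; simpl; auto. }
    intros Ht'. rewrite app_comm_cons, app_assoc. apply G_F; auto.
    + rewrite !length_app in *; simpl in *; lia.
    + intros s Hs'. apply in_app_iff in Hs' as [H|[<-|H]]; auto; apply Hs, in_app_iff; simpl; auto.
  - apply G_inv_C in HG as [rho [sg [cs1 [cs2 [w [Hi [Hr [Hj [Hjk [Hl1 [Hl2 [Hf1 [Hf2 [HL [HB [Hw He]]]]]]]]]]]]]]]].
    rewrite app_assoc, app_assoc in He.
    apply app_len_inv in He as [E1 E2].
    2:{ rewrite !length_app, !length_map, length_Bs by lia.
        rewrite (length_Ls ar R HS rho f (i - 1)) by auto. lia. }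
    injection E2 as -> ->. split; auto. intros Ht'.
    rewrite E1, <- !app_assoc. apply G_C; auto.
Qed.

Lemma step_G (t t' : T) : cstep ar R t t' -> G t -> G t'.
Proof.
  induction 1; intros HG.
  - eapply root_G; eauto.
  - apply ctx_G with (t' := t') in HG as [H1 H2]; auto.
Qed.

Lemma steps_G (t t' : T) : csteps ar R t t' -> G t -> G t'.
Proof. induction 1; auto. intros; apply IHcsteps; eapply step_G; eauto. Qed.

Lemma proper_G (s : T) : proper ar R s -> ground s -> G s.
Proof.
  induction s as [x|g args IH] using term_ind'; intros Hp Hg.
  - discriminate.
  - inversion Hp; subst. unfold ground in Hg; simpl in Hg.
    pose proof (flat_map_nil _ _ Hg) as Hg'.
    apply G_F; auto. intros s Hs. rewrite Forall_forall in IH, H2.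
    apply IH; [apply in_app_iff; auto|auto|apply Hg', in_app_iff; auto].
Qed.

End S.

Lemma nodup_app_disj {A} (l1 l2 : list A) x : NoDup (l1 ++ l2) -> In x l2 -> ~ In x l1.
Proof.
  induction l1; simpl; intros Hn H2 H1; auto. inversion Hn; subst.
  destruct H1 as [<-|H1]; [apply H3, in_app_iff; auto| eapply IHl1; eauto].
Qed.

Lemma vars_mapV {S} xs : flat_map vars (map (@V S) xs) = xs.
Proof. induction xs; simpl; f_equal; auto. Qed.

Section S.
Context {FS : Type} (ar : FS -> nat) (R : FS -> list (crule FS)).
Notation T := (term (hsym FS)).
Notation xb := (xi R tBot).

Definition Ok (b : term FS) (u : term FS) (L : list nat) : Prop :=
  (exists sg : nat -> T, subst sg (cemb b) = xb u) \/
  (exists v, AP ar R b v /\ disjoint (vars v) L /\ exists sg : nat -> T, subst sg v = xb u).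

Definition Pm (b : term FS) : Prop :=
  ctor_term R b -> wf ar b -> NoDup (vars b) ->
  forall u L, wf ar u -> vars u = [] -> Ok b u L.

Lemma AP_linear b v : AP ar R b v -> NoDup (vars v).
Proof.
  induction 1; simpl.
  - rewrite vars_mapV; auto.
  - rewrite flat_map_app, vars_mapV, flat_map_vars_repeat, app_nil_r; auto.
  - rewrite flat_map_app, vars_mapV. simpl. rewrite vars_mapV.
    apply (Permutation_NoDup (l := xs1 ++ xs2 ++ vars u)); [|assumption].
    apply Permutation_app_head. apply Permutation_app_comm.
Qed.

Lemma match_list ts : Forall Pm ts -> Forall (ctor_term R) ts -> Forall (wf ar) ts ->
  NoDup (flat_map vars ts) ->
  forall us, length ts = length us -> Forall (wf ar) us -> (forall u, In u us -> vars u = []) ->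
  forall L,
  (exists sg : nat -> T, map (subst sg) (map cemb ts) = map xb us) \/
  (exists ts1 t ts2 us1 u0 us2 v, ts = ts1 ++ t :: ts2 /\ us = us1 ++ u0 :: us2 /\
     length ts1 = length us1 /\ AP ar R t v /\ disjoint (vars v) L /\
     exists sg : nat -> T, subst sg v = xb u0).
Proof.
  induction ts as [|t ts IH]; intros HP Hc Hw Hn [|u0 us] Hl Hwu Hg L; simpl in Hl; try lia.
  - left. exists (fun _ => V 0). reflexivity.
  - inversion HP; inversion Hc; inversion Hw; inversion Hwu; subst. simpl in Hn.
    assert (Hn2 := NoDup_app_remove_l _ _ Hn).
    assert (Hn1 := NoDup_app_remove_r _ _ Hn).
    destruct (H1 H5 H9 Hn1 u0 L H13 (Hg u0 (or_introl eq_refl))) as [[s0 E0]|[v [Hv [Hd [s0 E0]]]]].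
    + destruct (IH H2 H6 H10 Hn2 us ltac:(lia) H14 (fun u H => Hg u (or_intror H)) L)
        as [[s1 E1]|[ts1 [t' [ts2 [us1 [u1 [us2 [v [-> [-> [Hl1 [Hv [Hd [s1 E1]]]]]]]]]]]]]].
      * left. exists (cmb (vars t) s0 s1). simpl. f_equal.
        -- rewrite <- E0. apply subst_ext. intros x Hx. rewrite vars_cemb in Hx. unfold cmb.
           destruct (in_dec Nat.eq_dec x (vars t)); tauto.
        -- rewrite <- E1. apply map_subst_ext. intros x Hx. rewrite flat_map_vars_cemb in Hx. unfold cmb.
           destruct (in_dec Nat.eq_dec x (vars t)); auto. exfalso. eapply nodup_app_disj; eauto.
      * right. exists (t :: ts1), t', ts2, (u0 :: us1), u1, us2, v. simpl. repeat split; auto. eauto.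
    + right. exists [], t, ts, [], u0, us, v. repeat split; auto. eauto.
Qed.

Lemma xb_Fn_ctor g us : is_constructor R g -> xb (Fn g us) = Fn (HF g) (map xb us).
Proof. intros H. simpl. unfold mf. rewrite H. simpl. rewrite app_nil_r. reflexivity. Qed.

Lemma match_term b : Pm b.
Proof.
  induction b as [x|f' ts IH] using term_ind'; intros Hct Hwb Hnd u L Hwu Hgu.
  - left. exists (fun _ => xb u). reflexivity.
  - destruct u as [y|g us]; [discriminate|].
    inversion Hct; subst. inversion Hwb; subst. inversion Hwu; subst.
    simpl in Hgu. pose proof (flat_map_nil _ _ Hgu) as Hgus.
    destruct (classic (R g = [])) as [Hgc|Hgd].
    + destruct (classic (g = f')) as [->|Hne].
      * destruct (match_list ts IH H2 H4 Hnd us ltac:(lia) H6 Hgus L)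
          as [[s0 E0]|[ts1 [t [ts2 [us1 [u0 [us2 [v [-> [-> [Hl1 [Hv [Hd [s0 E0]]]]]]]]]]]]]].
        -- left. exists s0. rewrite xb_Fn_ctor by auto. simpl. rewrite <- E0, map_map. reflexivity.
        -- right.
           destruct (fresh_vars (length ts1 + length ts2) (L ++ vars v)) as [xs [Hlx [Hnx Hdx]]].
           set (xs1 := firstn (length ts1) xs). set (xs2 := skipn (length ts1) xs).
           assert (Exs : xs = xs1 ++ xs2) by (symmetry; apply firstn_skipn).
           assert (L1 : length xs1 = length ts1) by (unfold xs1; rewrite length_firstn; lia).
           assert (L2 : length xs2 = length ts2) by (unfold xs2; rewrite length_skipn; lia).
           rewrite !length_app in H3, H5. simpl in H3, H5.
           exists (Fn (HF f') (map V xs1 ++ v :: map V xs2)). split; [|split].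
           ++ apply AP_arg; auto. rewrite app_assoc, <- Exs.
              apply NoDup_app; auto. eapply AP_linear; eauto.
              intros x Hx Hx'. apply (Hdx x Hx). apply in_app_iff; auto.
           ++ simpl. rewrite flat_map_app, vars_mapV. simpl. rewrite vars_mapV.
              intros x Hx HL. apply in_app_iff in Hx as [Hx|Hx]; [|apply in_app_iff in Hx as [Hx|Hx]].
              ** apply (Hdx x); [rewrite Exs; apply in_app_iff; auto|apply in_app_iff; auto].
              ** apply (Hd x Hx HL).
              ** apply (Hdx x); [rewrite Exs; apply in_app_iff; auto|apply in_app_iff; auto].
           ++ exists (upd xs (map xb us1 ++ map xb us2) s0).
              assert (Em : map (upd xs (map xb us1 ++ map xb us2) s0) xs = map xb us1 ++ map xb us2).
              { apply upd_map; auto. rewrite length_app, !length_map. lia. }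
              set (sg := upd xs (map xb us1 ++ map xb us2) s0) in *.
              assert (Em' : map sg xs1 ++ map sg xs2 = map xb us1 ++ map xb us2)
                by (rewrite <- map_app, <- Exs; exact Em). clear Em. rename Em' into Em.
              apply app_len_inv in Em as [Em1 Em2]; [|rewrite !length_map; lia].
              rewrite xb_Fn_ctor by auto. simpl. f_equal.
              rewrite map_app. simpl. change (map V xs1) with (Xs (FS:=FS) xs1).
              change (map V xs2) with (Xs (FS:=FS) xs2). rewrite !map_subst_Xs.
              rewrite map_app. simpl. rewrite Em1, Em2. f_equal. f_equal.
              rewrite <- E0. apply subst_ext. intros x Hx. apply upd_out.
              intros Hx'. apply (Hdx x Hx'). apply in_app_iff; auto.
      * right. destruct (fresh_vars (ar g) L) as [xs [Hlx [Hnx Hdx]]].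
        exists (Fn (HF g) (map V xs)). split; [|split].
        -- apply AP_ctor; auto.
        -- simpl. rewrite vars_mapV. auto.
        -- exists (upd xs (map xb us) (fun _ => V 0)). rewrite xb_Fn_ctor by auto. simpl. f_equal.
           change (map V xs) with (Xs (FS:=FS) xs). rewrite map_subst_Xs.
           apply upd_map; auto. rewrite length_map; lia.
    + right. destruct (fresh_vars (ar g) L) as [xs [Hlx [Hnx Hdx]]].
      exists (Fn (HF g) (map V xs ++ repeat tBot (mf R g))). split; [|split].
      * apply AP_def; auto.
      * simpl. rewrite flat_map_app, vars_mapV, flat_map_vars_repeat, app_nil_r. auto.
      * exists (upd xs (map xb us) (fun _ => V 0)). simpl. f_equal.
        rewrite map_app, map_subst_repeat by reflexivity. f_equal.
        change (map V xs) with (Xs (FS:=FS) xs). rewrite map_subst_Xs.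
        apply upd_map; auto. rewrite length_map; lia.
Qed.

End S.

Lemma nth_error_mid {A} (l l' : list A) x : nth_error (l ++ x :: l') (length l) = Some x.
Proof. induction l; simpl; auto. Qed.

Lemma collect {A B} (h : A -> B) (Q : A -> Prop) (ss : list B) :
  (forall s, In s ss -> exists u, Q u /\ s = h u) -> exists us, ss = map h us /\ forall u, In u us -> Q u.
Proof.
  induction ss as [|s ss IH]; intros H.
  - exists []. split; auto. intros u [].
  - destruct (H s (or_introl eq_refl)) as [u [Qu ->]].
    destruct IH as [us [-> Hus]]; [intros; apply H; simpl; auto|].
    exists (u :: us). split; auto. intros u' [<-|Hu]; auto.
Qed.

Lemma flags_split {FS} (cs : list (term (hsym FS))) : Forall (@flag FS) cs ->
  cs = repeat tBot (length cs) \/ exists a b, cs = a ++ tTop :: b.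
Proof.
  induction 1 as [|c cs Hc Hf IH]; simpl; auto.
  destruct Hc as [->| ->].
  - destruct IH as [E|[a [b E]]]; [left; f_equal; auto|right; exists (tBot :: a), b; rewrite E; auto].
  - right. exists [], cs. auto.
Qed.

Section S.
Context {FS : Type} (ar : FS -> nat) (R : FS -> list (crule FS)).
Hypothesis HS : strong_CCTRS ar R.
Notation T := (term (hsym FS)).
Notation G := (G ar R).
Notation xb := (xi R tBot).
Implicit Types rho : crule FS.

Lemma rv_cl rho x : In x (flat_map vars (cl rho)) -> In x (rule_vars rho).
Proof. intros; unfold rule_vars; apply in_app_iff; auto. Qed.

Lemma rv_cc rho a b x : In (a, b) (cc rho) -> In x (vars b) -> In x (rule_vars rho).
Proof.
  intros H Hx; unfold rule_vars; rewrite !in_app_iff; right; right.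
  apply in_flat_map. exists (a, b). simpl. rewrite in_app_iff; auto.
Qed.

Lemma rv_Ls rho x : In x (flat_map vars (Ls rho)) -> In x (rule_vars rho).
Proof. unfold Ls. rewrite flat_map_vars_cemb. apply rv_cl. Qed.

Lemma rv_Bs rho k x : In x (flat_map vars (Bs rho k)) -> In x (rule_vars rho).
Proof.
  rewrite Bs_eq, flat_map_vars_cemb, flat_map_map_snd. intros Hx.
  apply in_flat_map in Hx as [[a b] [Hp Hx]]. apply in_firstn in Hp. eapply rv_cc; eauto.
Qed.

Lemma Bs_disj rho f i j a b x : nth_error (R f) i = Some rho ->
  nth_error (cc rho) j = Some (a, b) -> In x (flat_map vars (Bs rho j)) -> ~ In x (vars b).
Proof.
  intros Hr Hj Hx Hb. apply (rfacts ar R HS) in Hr as [[_ [_ [_ [_ [_ [_ [_ [Hd2 _]]]]]]]] _]; auto.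
  rewrite Bs_eq, flat_map_vars_cemb, flat_map_map_snd in Hx.
  apply in_flat_map in Hx as [[a' b'] [Hp Hx]]. apply In_nth_error in Hp as [n Hn].
  rewrite nth_error_firstn in Hn. destruct (Nat.ltb_spec n j); [|discriminate].
  apply (Hd2 n j a' b' a b ltac:(lia) Hn Hj x); auto.
Qed.

Lemma nf_G (t : T) : G t -> ~ (exists u, cstep ar R t u) ->
  exists u, wf ar u /\ vars u = [] /\ t = xb u.
Proof.
  induction 1 as [f ss cs Hl Hss IH Hc Hf|f i j rho sg cs1 cs2 w Hi Hr Hj Hjk Hl1 Hl2 Hf1 Hf2 HL IHL HB IHB Hw IHw];
    intros Hnf.
  -
    assert (Hsn : forall s, In s ss -> exists u, (wf ar u /\ vars u = []) /\ s = xb u).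
    { intros s Hs. destruct (IH s Hs) as [u [H1 [H2 H3]]]; eauto.
      intros [s' Hst]. apply Hnf. apply in_split in Hs as [a [b ->]].
      exists (Fn (HF f) (a ++ s' :: b ++ cs)). rewrite <- app_assoc. simpl.
      apply cstep_ctx; auto. simpl. rewrite length_app in Hl; simpl in Hl; lia. }
    apply collect in Hsn as [us [-> Hus]].
    destruct (flags_split cs Hf) as [Ecs|[a [b Ecs]]].
    + exists (Fn f us). split; [|split].
      * constructor; [rewrite length_map in Hl; auto|]. rewrite Forall_forall; intros; apply Hus; auto.
      * simpl. clear -Hus. induction us as [|u0 us IHus]; simpl; auto.
        rewrite (proj2 (Hus u0 (or_introl eq_refl))). simpl.
        apply IHus. intros; apply Hus; simpl; auto.
      * simpl. rewrite Ecs, Hc. reflexivity.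
    + exfalso. apply Hnf.
      set (i := length a + 1).
      assert (Hi : i - 1 < length (R f)).
      { unfold mf in Hc. rewrite <- Hc, Ecs, length_app. simpl. unfold i. lia. }
      destruct (nth_error (R f) (i - 1)) as [rho|] eqn:Hr;
        [|apply nth_error_None in Hr; lia].
      pose proof (rfacts ar R HS _ _ _ Hr) as [[Hlcl [Hwcl [_ [_ [Hctl _]]]]] [Hncl _]].
      destruct (fresh_vars (mf R f) (rule_vars rho)) as [xs [Hlx [Hnx Hdx]]].
      assert (Hset : setup R f i rho xs) by (repeat split; auto; unfold i; lia).
      destruct (fresh_vars (ar f) (xs ++ rule_vars rho)) as [ys [Hly [Hny Hdy]]].
      assert (HPm : Forall (Pm ar R) (cl rho)) by (rewrite Forall_forall; intros; apply match_term).
      destruct (match_list ar R (cl rho) HPm Hctl Hwcl Hncl us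
                  ltac:(rewrite length_map in Hl; lia)
                  ltac:(rewrite Forall_forall; intros; apply Hus; auto)
                  ltac:(intros; apply Hus; auto) (xs ++ ys ++ rule_vars rho))
        as [[s0 E0]|[ts1 [lj [ts2 [us1 [u0 [us2 [v [Ecl [Eus [Hl1 [Hv [Hd [s0 E0]]]]]]]]]]]]]].
      * set (sg := upd xs cs s0).
        assert (Eterm : Fn (HF f) (map xb us ++ cs) =
                        subst sg (Fn (HF f) (Ls rho ++ splice (Xs xs) i [tTop]))).
        { simpl. rewrite map_app, map_subst_splice_Xs. unfold sg. rewrite upd_map by (auto; lia).
          f_equal. f_equal.
          - rewrite <- E0. symmetry. apply map_subst_ext. intros x Hx. apply upd_out.
            intros Hx'. apply (Hdx x Hx'). apply rv_Ls; auto.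
          - rewrite Ecs. unfold i. simpl. rewrite splice_mid. reflexivity. }
        rewrite Eterm. destruct (cc rho) as [|[a1 b1] ccr] eqn:Ecc.
        -- eexists. apply cstep_root. apply Xi1; auto.
        -- eexists. apply cstep_root. eapply Xi2; eauto. rewrite Ecc. reflexivity.
      * set (j := length ts1 + 1).
        set (sg := upd ys (map xb us) (upd xs cs s0)).
        assert (Eys : map sg ys = map xb us) by (apply upd_map; auto; rewrite length_map in *; lia).
        assert (Exs : map sg xs = cs).
        { transitivity (map (upd xs cs s0) xs); [|apply upd_map; auto; lia].
          apply map_ext_in. intros x Hx. apply upd_out. intros Hy. apply (Hdy x Hy), in_app_iff; auto. }
        assert (Ev : subst sg v = xb u0).
        { rewrite <- E0. apply subst_ext. intros x Hx. unfold sg. rewrite !upd_out; auto.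
          - intros Hx'. apply (Hd x Hx), in_app_iff; auto.
          - intros Hx'. apply (Hd x Hx). rewrite !in_app_iff; auto. }
        assert (Eterm : Fn (HF f) (map xb us ++ cs) =
                        subst sg (Fn (HF f) (splice (Xs ys) j [v] ++ splice (Xs xs) i [tTop]))).
        { simpl. rewrite map_app, !map_subst_splice_Xs, Eys, Exs. cbn [map]. rewrite Ev.
          f_equal. f_equal.
          - rewrite Eus, map_app. simpl. unfold j. rewrite Hl1, <- (length_map xb us1), splice_mid.
            reflexivity.
          - rewrite Ecs. unfold i. simpl. rewrite splice_mid. reflexivity. }
        rewrite Eterm. eexists. apply cstep_root.
        apply (@Xi6 FS ar R f i rho xs ys j lj v); auto.
        -- apply NoDup_app; auto. intros x Hx Hy. apply (Hdy x Hy), in_app_iff; auto.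
        -- intros x Hx Hx'. apply (Hdy x Hx), in_app_iff; auto.
        -- unfold j; lia.
        -- rewrite Ecl, length_app in Hlcl. simpl in Hlcl. unfold j. lia.
        -- rewrite Ecl. unfold j. replace (length ts1 + 1 - 1) with (length ts1) by lia.
           apply nth_error_mid.
  -
    assert (Hwn : ~ exists w', cstep ar R w w').
    { intros [w' Hst]. apply Hnf.
      exists (Fn (HCond f i j) ((map (subst sg) (Ls rho) ++ cs1 ++ map (subst sg) (Bs rho (j - 1))) ++ w' :: cs2)).
      assert (E : forall z, map (subst sg) (Ls rho) ++ cs1 ++ map (subst sg) (Bs rho (j - 1)) ++ z :: cs2
        = (map (subst sg) (Ls rho) ++ cs1 ++ map (subst sg) (Bs rho (j - 1))) ++ z :: cs2)
        by (intros; rewrite <- !app_assoc; reflexivity).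
      rewrite E. apply cstep_ctx; auto. simpl.
      rewrite !length_app, !length_map, length_Bs by lia.
      rewrite (length_Ls ar R HS rho f (i - 1)) by auto. lia. }
    destruct (IHw Hwn) as [u [Hwu [Hgu Ew]]].
    exfalso. apply Hnf.
    assert (Hjn : j - 1 < length (cc rho)) by lia.
    destruct (nth_error (cc rho) (j - 1)) as [[a b]|] eqn:Hab; [|apply nth_error_None in Hab; lia].
    pose proof (rfacts ar R HS _ _ _ Hr) as [[Hlcl [_ [_ [Hwc [_ [Hctb [Hd1 [_ _]]]]]]]] [_ Hlin]].
    assert (Hab' := nth_error_In _ _ Hab).
    rewrite Forall_forall in Hwc, Hctb, Hlin.
    destruct (fresh_vars (mf R f) (rule_vars rho)) as [xs [Hlx [Hnx Hdx]]].
    assert (Hset : setup R f i rho xs) by (repeat split; auto).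
    set (cs := cs1 ++ tBot :: cs2).
    assert (Hsp : forall ws, splice cs i ws = cs1 ++ ws ++ cs2).
    { intros ws. unfold cs. replace i with (length cs1 + 1) by lia. apply splice_mid. }
    destruct (match_term ar R b (Hctb _ Hab') (proj2 (Hwc _ Hab')) (Hlin _ Hab') u (xs ++ rule_vars rho) Hwu Hgu)
      as [[s0 E0]|[v [Hv [Hd [s0 E0]]]]].
    + set (sg' := upd xs cs (cmb (vars b) s0 sg)).
      assert (Exs : map sg' xs = cs) by (apply upd_map; auto; unfold cs; rewrite length_app; simpl; lia).
      assert (EL : map (subst sg') (Ls rho) = map (subst sg) (Ls rho)).
      { apply map_subst_ext. intros x Hx. unfold sg'. rewrite upd_out.
        - unfold cmb. destruct (in_dec Nat.eq_dec x (vars b)) as [Hb|]; auto. exfalso.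
          unfold Ls in Hx. rewrite flat_map_vars_cemb in Hx. apply (Hd1 _ _ _ Hab x Hx Hb).
        - intros Hx'. apply (Hdx x Hx'). apply rv_Ls; auto. }
      assert (EB : map (subst sg') (Bs rho (j - 1)) = map (subst sg) (Bs rho (j - 1))).
      { apply map_subst_ext. intros x Hx. unfold sg'. rewrite upd_out.
        - unfold cmb. destruct (in_dec Nat.eq_dec x (vars b)) as [Hb|]; auto. exfalso.
          eapply Bs_disj; eauto.
        - intros Hx'. apply (Hdx x Hx'). eapply rv_Bs; eauto. }
      assert (Eb : subst sg' (cemb b) = xb u).
      { rewrite <- E0. apply subst_ext. intros x Hx. rewrite vars_cemb in Hx. unfold sg'. rewrite upd_out.
        - unfold cmb. destruct (in_dec Nat.eq_dec x (vars b)); tauto.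
        - intros Hx'. apply (Hdx x Hx'). eapply rv_cc; eauto. }
      assert (EBj : Bs rho j = Bs rho (j - 1) ++ [cemb b]).
      { replace j with (S (j - 1)) at 1 by lia. eapply Bs_S; eauto. }
      assert (Eterm : Fn (HCond f i j) (map (subst sg) (Ls rho) ++ cs1 ++ map (subst sg) (Bs rho (j - 1)) ++ w :: cs2)
                      = subst sg' (Fn (HCond f i j) (Ls rho ++ splice (Xs xs) i (Bs rho j)))).
      { simpl. rewrite map_app, map_subst_splice_Xs, Exs, Hsp, EL, EBj, map_app, EB. simpl. rewrite Eb, Ew.
        rewrite <- app_assoc. reflexivity. }
      rewrite Eterm.
      destruct (Nat.eq_dec j (length (cc rho))) as [Ej|Ej].
      * eexists. apply cstep_root. rewrite Ej. apply Xi3; auto. lia.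
      * destruct (nth_error (cc rho) j) as [[a' b']|] eqn:Hab2; [|apply nth_error_None in Hab2; lia].
        eexists. apply cstep_root. eapply Xi4; eauto. lia.
    + set (sg' := upd xs cs (cmb (vars v) s0 sg)).
      assert (Exs : map sg' xs = cs) by (apply upd_map; auto; unfold cs; rewrite length_app; simpl; lia).
      assert (EL : map (subst sg') (Ls rho) = map (subst sg) (Ls rho)).
      { apply map_subst_ext. intros x Hx. unfold sg'. rewrite upd_out.
        - unfold cmb. destruct (in_dec Nat.eq_dec x (vars v)) as [Hb|]; auto. exfalso.
          apply (Hd x Hb). apply in_app_iff; right. apply rv_Ls; auto.
        - intros Hx'. apply (Hdx x Hx'). apply rv_Ls; auto. }
      assert (EB : map (subst sg') (Bs rho (j - 1)) = map (subst sg) (Bs rho (j - 1))).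
      { apply map_subst_ext. intros x Hx. unfold sg'. rewrite upd_out.
        - unfold cmb. destruct (in_dec Nat.eq_dec x (vars v)) as [Hb|]; auto. exfalso.
          apply (Hd x Hb). apply in_app_iff; right. eapply rv_Bs; eauto.
        - intros Hx'. apply (Hdx x Hx'). eapply rv_Bs; eauto. }
      assert (Eb : subst sg' v = xb u).
      { rewrite <- E0. apply subst_ext. intros x Hx. unfold sg'. rewrite upd_out.
        - unfold cmb. destruct (in_dec Nat.eq_dec x (vars v)); tauto.
        - intros Hx'. apply (Hd x Hx). apply in_app_iff; auto. }
      assert (Eterm : Fn (HCond f i j) (map (subst sg) (Ls rho) ++ cs1 ++ map (subst sg) (Bs rho (j - 1)) ++ w :: cs2)
                      = subst sg' (Fn (HCond f i j) (Ls rho ++ splice (Xs xs) i (Bs rho (j - 1) ++ [v])))).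
      { simpl. rewrite map_app, map_subst_splice_Xs, Exs, Hsp, EL, map_app, EB. simpl. rewrite Eb, Ew.
        rewrite <- app_assoc. reflexivity. }
      rewrite Eterm. eexists. apply cstep_root.
      eapply Xi5; eauto.
Qed.

End S.
Theorem lemmaA (FS : Type) (ar : FS -> nat) (R : FS -> list (crule FS))
  (s t : term (hsym FS)) :
  strong_CCTRS ar R ->
  proper ar R s -> ground s ->
  normal_form_of ar R s t ->
  bot_pattern ar R t.
Proof.
  intros HS Hp Hg [Hst Hnf].
  pose proof (proper_G ar R s Hp Hg) as HGs.
  pose proof (steps_G ar R HS s t Hst HGs) as HGt.
  destruct (nf_G ar R HS t HGt Hnf) as [u [Hwu [Hgu ->]]].
  split.
  - unfold linear. rewrite vars_xi by reflexivity. rewrite Hgu. constructor.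
  - exists u. auto.
Qed.
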